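(* Let $f,g:\mathbb{F}_2^N\to\mathbb{F}_2$. Then $$\langle f,g\rangle^8\le\mathbb{E}_{y,z\in\mathbb{F}_2^N}\langle f_{y,z},g_{y,z}\rangle^2.$$
   Context: $\langle f,g\rangle=\mathbb{E}_{x\in\mathbb{F}_2^N}(-1)^{f(x)+g(x)}$, $f_y(x)=f(x+y)-f(x)$, and $f_{y,z}=(f_y)_z$. *)

(* Defs.v *)
From mathcomp Require Import all_boot all_order all_algebra.
Set Implicit Arguments. Unset Strict Implicit. Unset Printing Implicit Defensive.
Import GRing.Theory Num.Theory.
Local Open Scope ring_scope.

(* F_2^N is modelled as row vectors 'rV['F_2]_N; Boolean functions are
   f : 'rV['F_2]_N -> 'F_2.  Real values are taken in rat (exact). *)

Definition sgn2 (a : 'F_2) : rat := (-1) ^+ (nat_of_ord a).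

Definition corr (N : nat) (f g : 'rV['F_2]_N -> 'F_2) : rat :=
  (#|{: 'rV['F_2]_N}|%:R)^-1 * \sum_(x : 'rV['F_2]_N) sgn2 (f x + g x).

Definition deriv2 (N : nat) (f : 'rV['F_2]_N -> 'F_2) (y : 'rV['F_2]_N)
  : 'rV['F_2]_N -> 'F_2 := fun x => f (x + y) - f x.

(* Main.v *)
Require Import Defs.
From mathcomp Require Import all_boot all_order all_algebra.
From mathcomp Require Import ring lra.
Import Order.TTheory GRing.Theory Num.Theory.
Local Open Scope ring_scope.

Lemma sgn2D (a b : 'F_2) : sgn2 (a + b) = sgn2 a * sgn2 b.
Proof.
case: a => [[|[|?]] Ha] //; case: b => [[|[|?]] Hb] //;
rewrite /sgn2 /=; apply/eqP; by rewrite ?expr0 ?expr1 ?mul1r ?mulr1.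
Qed.

Lemma sgn2N (a : 'F_2) : sgn2 (- a) = sgn2 a.
Proof.
case: a => [[|[|?]] Ha] //; rewrite /sgn2 /=; apply/eqP; by [].
Qed.

Section S.
Variable N : nat.
Local Notation V := 'rV['F_2]_N.

Lemma sumshift (u : V -> rat) (x : V) : \sum_z u (x + z) = \sum_z u z.
Proof. by rewrite [RHS](reindex_inj (addrI x)). Qed.

Lemma autocorr (u : V -> rat) :
  \sum_z \sum_x u x * u (x + z) = (\sum_x u x) ^+ 2.
Proof.
rewrite exchange_big /=.
under eq_bigr => x _ do rewrite -mulr_sumr (sumshift (fun w => u w) x).
by rewrite expr2 mulr_suml.
Qed.

Lemma CS (I : finType) (a : I -> rat) :
  (\sum_i a i) ^+ 2 <= #|I|%:R * \sum_i a i ^+ 2.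
Proof.
have H : 0 <= \sum_i \sum_j (a i - a j) ^+ 2.
  by apply: sumr_ge0 => i _; apply: sumr_ge0 => j _; apply: sqr_ge0.
have E : \sum_i \sum_j (a i - a j) ^+ 2 =
   2%:R * (#|I|%:R * \sum_i a i ^+ 2) - 2%:R * (\sum_i a i) ^+ 2.
  transitivity (\sum_i \sum_j (a i ^+ 2 + a j ^+ 2 - 2%:R * (a i * a j))).
    by apply: eq_bigr => i _; apply: eq_bigr => j _; ring.
  under eq_bigr => i _ do rewrite sumrB big_split /= sumr_const -mulr_sumr.
  rewrite sumrB big_split /= sumr_const -mulr_sumr.
  rewrite -sumrMnl.
  under [X in _ - 2 * X]eq_bigr => i _ do rewrite -mulr_sumr.
  rewrite -mulr_suml -expr2.
  set s2 := \sum_i a i ^+ 2. set s := \sum_i a i.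
  rewrite -[#|xpredT|]/#|I|.
  rewrite !sumrMnl -/s2 -[s2 *+ _]mulr_natl.
  ring.
lra.
Qed.
End S.

Theorem corollary4p2 (N : nat) (f g : 'rV['F_2]_N -> 'F_2) :
  corr f g ^+ 8 <=
  (#|{: 'rV['F_2]_N}|%:R ^+ 2)^-1 *
    \sum_(y : 'rV['F_2]_N) \sum_(z : 'rV['F_2]_N)
      corr (deriv2 (deriv2 f y) z) (deriv2 (deriv2 g y) z) ^+ 2.
Proof.
set n : rat := #|{: 'rV['F_2]_N}|%:R.
have n0 : 0 < n by rewrite /n ltr0n; apply/card_gt0P; exists 0.
pose h x := sgn2 (f x + g x).
pose u (y x : 'rV['F_2]_N) := h x * h (x + y).
have Hd y z x : sgn2 (deriv2 (deriv2 f y) z x + deriv2 (deriv2 g y) z x)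
    = u y x * u y (x + z).
  rewrite /u /h /deriv2; rewrite !(sgn2D, sgn2N); ring.
pose S := \sum_x h x.
pose A y z := \sum_x u y x * u y (x + z).
pose B y := \sum_x u y x.
have Ecorr : corr f g = n^-1 * S by [].
have Ecorr2 y z : corr (deriv2 (deriv2 f y) z) (deriv2 (deriv2 g y) z) = n^-1 * A y z.
  rewrite /corr; congr (_ * _); apply: eq_bigr => x _; exact: Hd.
under eq_bigr => y _ do under eq_bigr => z _ do rewrite Ecorr2 exprMn.
under eq_bigr => y _ do rewrite -mulr_sumr.
rewrite -mulr_sumr Ecorr exprMn.
set Q := \sum_y \sum_z A y z ^+ 2.
set T := \sum_y \sum_z A y z.
have HT : T = \sum_y B y ^+ 2 by apply: eq_bigr => y _; exact: autocorr (u y).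
have HS : \sum_y B y = S ^+ 2 by exact: autocorr h.
have key1 : S ^+ 4 <= n * T.
  rewrite HT (_ : 4 = 2 * 2)%N // exprM -HS; exact: CS.
have key2 : T ^+ 2 <= n ^+ 2 * Q.
  apply: (le_trans (CS _ (fun y => \sum_z A y z))).
  rewrite expr2 -mulrA ler_pM2l // mulr_sumr ler_sum // => y _.
  exact: CS.
have S4 : 0 <= S ^+ 4 by rewrite (_ : 4 = 2 * 2)%N // exprM sqr_ge0.
have key : S ^+ 8 <= n ^+ 4 * Q.
  have e1 : S ^+ 8 = S ^+ 4 * S ^+ 4 by rewrite -exprD.
  rewrite e1; apply: le_trans (_ : (n * T) * (n * T) <= _).
    by apply: ler_pM.
  rewrite mulrACA -expr2 -[T * T]expr2 (_ : 4 = 2 + 2)%N // exprD -mulrA.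
  by rewrite ler_pM2l ?exprn_gt0.
have -> : (n ^+ 2)^-1 * (n^-1 ^+ 2 * Q) = n^-1 ^+ 8 * (n ^+ 4 * Q).
  by field; rewrite lt0r_neq0.
by rewrite ler_wpM2l // exprn_ge0 // invr_ge0 ltW.
Qed.
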